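(* Fix $f\in\mathbb{N}$ and $\ell=f+1$. For a family of directed graphs $G=(V,E)$ with $n=|V|\to\infty$, consider the reinforcement $V'=V\times[\ell]$, $P(v_i)=v$, $E'=\{(v',w'):(P(v'),P(w'))\in E\}$, with $A'$ defined from $A$ by: every $v'$ initializes copies of the state variables of $P(v')$, sends on each $(v',w')\in E'$ the message $P(v')$ would send on $(P(v'),P(w'))$ under $A$, and updates its state as if $P(v')$ received from each in-neighbor $w$ the unique message sent to $v'$ by some copy of $w$. Let $F'\subseteq V'$ contain each node independently with probability $p=p(n)$, faulty nodes suffering omission faults. (a) If $p\in o(n^{-1/(f+1)})$, then with probability $1-o(1)$ no $v\in V$ has all its $\ell$ copies in $F'$, and consequently $A'$ strongly simulates $A$ with probability $1-o(1)$, i.e., the reinforcement is a valid strong reinforcement under $\mathrm{Om}(p)$. (b) If $G$ contains $\Omega(n)$ nodes with non-zero outdegree and $p\in\omega(n^{-1/(f+1)})$, then with probability $1-o(1)$ all copies of some node with non-zero outdegree are faulty, and the reinforcement is not valid.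
   Context: Networks are synchronous directed graphs running a scheduling algorithm $A$ (each round: send messages on outgoing links based on state, then update state from received messages and environment input). $\mathrm{Om}(p)$: each node of $V'$ is independently faulty with probability $p$; faulty nodes may omit sending messages they should send but otherwise follow the protocol. Strong simulation under $\mathrm{Om}(p)$: assuming each $v'\in V'$ receives the same environment input as $P(v')$, every $v'\in V'$ computes in each round the state of $P(v')$ in the fault-free execution of $A$. A reinforcement is valid if $A'$ is a (strong) simulation of $A$ with probability $1-o(1)$ as $n\to\infty$ ($f$ fixed). *)

(* Defs.v *)
From Stdlib Require Import Reals ClassicalEpsilon.
From HB Require Import structures.
From mathcomp Require Import all_boot.

Set Implicit Arguments.
Unset Strict Implicit.
Unset Printing Implicit Defensive.

(* A synchronous algorithm on node set V, with state type S, message type M,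
   environment-input type I.  In each round every node v sends to each
   out-neighbour w the message [alg_send v s w] (s = current state of v), then
   updates its state from its current state, the messages received (a function
   giving, for each potential sender, [Some m] if m was received from it and
   [None] otherwise) and its environment input of that round. *)
Record algorithm (V : finType) (S M I : Type) := Algorithm {
  alg_init   : V -> S;
  alg_send   : V -> S -> V -> M;
  alg_update : V -> S -> (V -> option M) -> I -> S }.

(* Execution of [A] on the directed graph [G] (edge (w,v) iff [G w v]) with
   faulty set [F] under omission faults: [om r w v] says whether faulty node w
   omits its round-r message to v (only effective if w \in F).
   [exec_om ... r v] is the state of v after r rounds. *)
Fixpoint exec_om (V : finType) (S M I : Type) (G : rel V)
    (A : algorithm V S M I) (F : {set V}) (om : nat -> V -> V -> bool)
    (inp : nat -> V -> I) (r : nat) : V -> S :=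
  match r with
  | 0 => alg_init A
  | r'.+1 => fun v =>
      let st := exec_om G A F om inp r' in
      alg_update A v (st v)
        (fun w => if G w v && ~~ ((w \in F) && om r' w v)
                  then Some (alg_send A w (st w) v) else None)
        (inp r' v)
  end.

Definition exec (V : finType) (S M I : Type) (G : rel V)
    (A : algorithm V S M I) (inp : nat -> V -> I) : nat -> V -> S :=
  exec_om G A set0 (fun _ _ _ => false) inp.

Definition reinf_graph {V : finType} (l : nat) (G : rel V) : rel (V * 'I_l)%type :=
  fun x y => G x.1 y.1.
Arguments reinf_graph {V} l G _ _.

Definition pick_msg {l : nat} {M : Type} (g : 'I_l -> option M) : option M :=
  foldr (fun j acc => if g j is Some m then Some m else acc) None (enum 'I_l).

Definition reinforce {V : finType} {S M I : Type} (l : nat)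
    (A : algorithm V S M I) : algorithm (V * 'I_l)%type S M I :=
  Algorithm
    (fun x => alg_init A x.1)
    (fun x s y => alg_send A x.1 s y.1)
    (fun x s rcv i =>
       alg_update A x.1 s (fun w => pick_msg (fun j => rcv (w, j))) i).
Arguments reinforce {V S M I} l A.

Definition strongly_simulates (V : finType) (S M I : Type) (l : nat)
    (G : rel V) (A : algorithm V S M I) (F : {set (V * 'I_l)%type}) : Prop :=
  forall (inp : nat -> V -> I) (om : nat -> (V * 'I_l)%type -> (V * 'I_l)%type -> bool)
         (r : nat) (x : (V * 'I_l)%type),
    exec_om (reinf_graph l G) (reinforce l A) F om (fun r x => inp r x.1) r x
    = exec G A inp r x.1.

(* Probability of an event E (on faulty sets) when each element of T is
   faulty independently with probability p. *)
Definition prob (T : finType) (p : R) (E : {set T} -> Prop) : R :=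
  \big[Rplus/R0]_(F : {set T})
     (if excluded_middle_informative (E F)
      then Rmult (pow p #|F|) (pow (Rminus R1 p) (#|T| - #|F|)) else R0).

(* Main.v *)
Require Import Defs.
From Stdlib Require Import Reals Lra Lia Classical ClassicalEpsilon FunctionalExtensionality.
From HB Require Import structures.
From mathcomp Require Import all_boot zify.
Open Scope R_scope.

Lemma RplusA : associative Rplus. Proof. by move=> x y z; rewrite Rplus_assoc. Qed.
Lemma RmultA : associative Rmult. Proof. by move=> x y z; rewrite Rmult_assoc. Qed.
HB.instance Definition _ := Monoid.isComLaw.Build R R0 Rplus RplusA Rplus_comm Rplus_0_l.
HB.instance Definition _ := Monoid.isComLaw.Build R R1 Rmult RmultA Rmult_comm Rmult_1_l.
HB.instance Definition _ := Monoid.isMulLaw.Build R R0 Rmult Rmult_0_l Rmult_0_r.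
HB.instance Definition _ := Monoid.isAddLaw.Build R Rmult Rplus Rmult_plus_distr_r Rmult_plus_distr_l.

Lemma iter_pow (c : R) k : iter k (Rmult c) R1 = c ^ k.
Proof. by elim: k => //= k ->. Qed.

Lemma sum_sets (T : finType) (a b : T -> R) :
  \big[Rplus/R0]_(F : {set T}) \big[Rmult/R1]_(t : T) (if t \in F then a t else b t)
  = \big[Rmult/R1]_(t : T) (a t + b t).
Proof.
have -> : \big[Rmult/R1]_(t : T) (a t + b t) =
   \big[Rmult/R1]_(t : T) \big[Rplus/R0]_(x : bool) (if x then a t else b t).
  by apply: eq_bigr => t _; rewrite big_bool.
rewrite bigA_distr_bigA.
rewrite (reindex (fun phi : {ffun T -> bool} => [set t | phi t])).
  by apply: eq_bigr => phi _; apply: eq_bigr => t _; rewrite inE.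
exists (fun F : {set T} => [ffun t => t \in F]).
  by move=> phi _; apply/ffunP => t; rewrite ffunE inE.
by move=> F _; apply/setP => t; rewrite !inE ffunE.
Qed.

Lemma wt_prod (T : finType) p (F : {set T}) :
  pow p #|F| * pow (1 - p) (#|T| - #|F|) =
  \big[Rmult/R1]_(t : T) (if t \in F then p else 1 - p).
Proof.
rewrite (bigID (mem F)) /=.
rewrite (eq_bigr (fun _ => p)); last by move=> t ->.
rewrite [X in _ = _ * X](eq_bigr (fun _ => 1 - p)); last by move=> t Ht; rewrite (negbTE Ht).
rewrite !big_const !iter_pow.
congr (_ * _ ^ _).
by rewrite -(cardC (mem F)) addKn.
Qed.

Definition slice {V I : finType} (F : {set (V * I)}) (v : V) : {set I} :=
  [set i | (v, i) \in F].

Lemma sum_slices (V I : finType) (g : V -> {set I} -> R) :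
  \big[Rplus/R0]_(F : {set (V * I)}) \big[Rmult/R1]_(v : V) g v (slice F v)
  = \big[Rmult/R1]_(v : V) \big[Rplus/R0]_(S : {set I}) g v S.
Proof.
rewrite bigA_distr_bigA.
rewrite (reindex (fun phi : {ffun V -> {set I}} => [set x | x.2 \in phi x.1])).
  apply: eq_bigr => phi _; apply: eq_bigr => v _; congr (g v _).
  by apply/setP => i; rewrite !inE.
exists (fun F : {set (V * I)} => [ffun v => slice F v]).
  by move=> phi _; apply/ffunP => v; rewrite ffunE; apply/setP => i; rewrite !inE.
by move=> F _; apply/setP => [[v i]]; rewrite !inE ffunE inE.
Qed.

Lemma sum_all (I : finType) p :
  \big[Rplus/R0]_(S : {set I}) \big[Rmult/R1]_(i : I) (if i \in S then p else 1 - p) = 1.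
Proof.
rewrite sum_sets big1 // => i _; lra.
Qed.

Lemma key (V : finType) (l : nat) p (W : {set V}) :
  \big[Rplus/R0]_(F : {set (V * 'I_l)})
     (if [forall v, (v \in W) ==> (slice F v != setT)]
      then pow p #|F| * pow (1 - p) (#|{: V * 'I_l}| - #|F|) else 0)
  = pow (1 - pow p l) #|W|.
Proof.
pose g v (S : {set 'I_l}) := if (v \in W) ==> (S != setT)
   then \big[Rmult/R1]_(i : 'I_l) (if i \in S then p else 1 - p) else 0.
transitivity (\big[Rplus/R0]_(F : {set (V * 'I_l)}) \big[Rmult/R1]_(v : V) g v (slice F v)).
  apply: eq_bigr => F _.
  rewrite wt_prod (eq_bigr (fun t => if (t.1, t.2) \in F then p else 1 - p)); last by case.
  rewrite -(pair_bigA _ (fun v i => if (v, i) \in F then p else 1 - p)).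
  case: (boolP [forall v, _]) => H.
    apply: eq_bigr => v _; rewrite /g.
    move/forallP: H => /(_ v) ->.
    by apply: eq_bigr => i _; rewrite inE.
  move/forallPn: H => [v Hv].
  rewrite (bigD1 v) //= /g (negbTE Hv).
  by rewrite Rmult_0_l.
rewrite (sum_slices _ _ g).
transitivity (\big[Rmult/R1]_(v : V) (if v \in W then 1 - pow p l else 1)).
  apply: eq_bigr => v _; rewrite /g.
  case: (boolP (v \in W)) => Hv /=.
    have H1 := sum_all 'I_l p.
    rewrite (bigD1 setT) //= in H1.
    rewrite (eq_bigr (fun _ => p)) in H1; last by move=> i _; rewrite inE.
    rewrite big_const card_ord iter_pow in H1.
    rewrite -big_mkcond /=.
    apply: (Rplus_eq_reg_l (p ^ l)); rewrite H1; ring.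
  exact: sum_all.
by rewrite -big_mkcond big_const iter_pow.
Qed.
Lemma pow_le1 x n : 0 <= x <= 1 -> x ^ n <= 1.
Proof. move=> h; rewrite -(pow1 n); apply: pow_incr; lra. Qed.

Lemma pow_le_self x k : 0 <= x <= 1 -> (1 <= k)%nat -> x ^ k <= x.
Proof.
move=> h; elim: k => [|k IH] Hk; first lia.
destruct k as [|k]; first (simpl; lra).
have := IH ltac:(lia); simpl => H.
have := pow_le x (S k) (proj1 h). simpl => H2. nra.
Qed.

Lemma pow_ge_self x k : 1 <= x -> (1 <= k)%nat -> x <= x ^ k.
Proof. move=> h hk; rewrite -{1}(pow_1 x); apply: Rle_pow => //; apply/leP; exact: hk. Qed.

Lemma bernoulli q n : 0 <= q <= 1 -> 1 - INR n * q <= (1 - q) ^ n.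
Proof.
move=> h; elim: n => [|n IH]; first (simpl; lra).
rewrite S_INR /=.
have H0 : 0 <= INR n by apply: pos_INR.
nra.
Qed.

Lemma exp_pow a n : exp a ^ n = exp (a * INR n).
Proof.
elim: n => [|n IH]; first by rewrite /= Rmult_0_r exp_0.
rewrite S_INR /= IH -exp_plus; f_equal; ring.
Qed.

Lemma exp_bound q K : 0 <= q <= 1 -> (1 - q) ^ K <= exp (- (q * INR K)).
Proof.
move=> h.
have -> : - (q * INR K) = (- q) * INR K by ring.
rewrite -exp_pow; apply: pow_incr; split; first lra.
have := exp_ineq1_le (- q); lra.
Qed.

Lemma rpow_id (n l : nat) : (0 < n)%nat -> (0 < l)%nat ->
  Rpower (INR n) (/ INR l) ^ l = INR n.
Proof.
move=> hn hl.
have Hn : 0 < INR n by apply: lt_0_INR; lia.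
have Hl : 0 < INR l by apply: lt_0_INR; lia.
rewrite -Rpower_pow; last by rewrite /Rpower; apply: exp_pos.
rewrite Rpower_mult Rinv_l; last lra.
exact: Rpower_1.
Qed.

Lemma rpow_pos (x y : R) : 0 < Rpower x y.
Proof. rewrite /Rpower; apply: exp_pos. Qed.

Lemma limA (p : nat -> R) (l : nat) : (forall n, 0 <= p n <= 1) -> (0 < l)%nat ->
  Un_cv (fun n => p n * Rpower (INR n) (/ INR l)) 0 ->
  Un_cv (fun n => (1 - p n ^ l) ^ n) 1.
Proof.
move=> hp hl hu eps heps.
have [N0 HN0] := hu (Rmin 1 eps) ltac:(apply: Rmin_pos; lra).
exists (max N0 1) => n hn.
have hn0 : (n >= N0)%coq_nat by lia.
have hn1 : (0 < n)%nat by lia.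
have := HN0 n hn0; rewrite /R_dist Rminus_0_r => H.
have hr := rpow_pos (INR n) (/ INR l).
have hpn := hp n.
have hu0 : 0 <= p n * Rpower (INR n) (/ INR l) by nra.
rewrite Rabs_pos_eq // in H.
have Hm1 := Rmin_l 1 eps. have Hm2 := Rmin_r 1 eps.
have hq : 0 <= p n ^ l <= 1 by split; [apply: pow_le; lra | apply: pow_le1].
have Hq : (p n * Rpower (INR n) (/ INR l)) ^ l = INR n * p n ^ l.
  by rewrite Rpow_mult_distr rpow_id // Rmult_comm.
have Hle : (p n * Rpower (INR n) (/ INR l)) ^ l <= p n * Rpower (INR n) (/ INR l).
  apply: pow_le_self; [lra | lia].
have B1 := bernoulli (p n ^ l) n hq.
have B2 : (1 - p n ^ l) ^ n <= 1 by apply: pow_le1; lra.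
rewrite /R_dist Rabs_left1; lra.
Qed.

Lemma limB (p : nat -> R) (l : nat) (K : nat -> nat) (c : R) (N : nat) :
  (forall n, 0 <= p n <= 1) -> (0 < l)%nat -> 0 < c ->
  (forall n, (N <= n)%nat -> c * INR n <= INR (K n)) ->
  cv_infty (fun n => p n * Rpower (INR n) (/ INR l)) ->
  Un_cv (fun n => (1 - p n ^ l) ^ (K n)) 0.
Proof.
move=> hp hl hc hK hu eps heps.
have [N0 HN0] := hu (Rmax 1 (- ln eps / c)).
exists (max (max N0 N) 1) => n hn.
have hn0 : (n >= N0)%coq_nat by lia.
have hn1 : (0 < n)%nat by lia.
have hnN : (N <= n)%nat by lia.
have H := HN0 n hn0.
have hpn := hp n.
have hq : 0 <= p n ^ l <= 1 by split; [apply: pow_le; lra | apply: pow_le1].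
have Hq : (p n * Rpower (INR n) (/ INR l)) ^ l = INR n * p n ^ l.
  by rewrite Rpow_mult_distr rpow_id // Rmult_comm.
have Hm1 := Rmax_l 1 (- ln eps / c). have Hm2 := Rmax_r 1 (- ln eps / c).
have Hge : p n * Rpower (INR n) (/ INR l) <= (p n * Rpower (INR n) (/ INR l)) ^ l.
  apply: pow_ge_self; [lra | lia].
have Hqn : - ln eps / c < INR n * p n ^ l by lra.
have Hqn' : - ln eps < c * (INR n * p n ^ l).
  have := Rmult_lt_compat_l c _ _ hc Hqn.
  by rewrite /Rdiv -Rmult_assoc (Rmult_comm c (- ln eps)) Rmult_assoc Rinv_r ?Rmult_1_r; lra.
have HK := hK n hnN.
have E1 := exp_bound (p n ^ l) (K n) hq.
have E2 : exp (- (p n ^ l * INR (K n))) <= exp (- (c * (INR n * p n ^ l))).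
  suff Hs : - (p n ^ l * INR (K n)) <= - (c * (INR n * p n ^ l)).
    case: (Rle_lt_or_eq_dec _ _ Hs) => [Hlt|->]; [left; exact: exp_increasing | right; reflexivity].
  have : p n ^ l * (c * INR n) <= p n ^ l * INR (K n) by apply: Rmult_le_compat_l; lra.
  lra.
have E3 : exp (- (c * (INR n * p n ^ l))) < eps.
  rewrite -{1}(exp_ln eps heps); apply: exp_increasing; lra.
have E0 : 0 <= (1 - p n ^ l) ^ (K n) by apply: pow_le; lra.
rewrite /R_dist Rminus_0_r Rabs_pos_eq; lra.
Qed.

Definition wt (T : finType) p (F : {set T}) :=
  Rmult (pow p #|F|) (pow (Rminus R1 p) (#|T| - #|F|)).
Arguments wt {T} p F.

Lemma prob_bool (T : finType) p (E : {set T} -> Prop) (B : {set T} -> bool) :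
  (forall F, E F <-> B F) ->
  prob p E = \big[Rplus/R0]_(F : {set T}) (if B F then wt p F else 0).
Proof.
move=> h; rewrite /prob; apply: eq_bigr => F _.
case: excluded_middle_informative => H; case: (boolP (B F)) => HB //.
  by have := proj1 (h F) H; rewrite (negbTE HB).
by exfalso; apply: H; apply/h.
Qed.
Arguments prob_bool {T} p {E} B _.

Lemma wt_ge0 (T : finType) p (F : {set T}) : 0 <= p <= 1 -> 0 <= wt p F.
Proof.
move=> h; rewrite /wt; apply: Rmult_le_pos; apply: pow_le; lra.
Qed.

Lemma prob_true (T : finType) p : prob p (fun _ : {set T} => True) = 1.
Proof.
rewrite (prob_bool p (fun _ => true)) //.
rewrite -(sum_all T p); apply: eq_bigr => F _.
rewrite -wt_prod /wt; reflexivity.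
Qed.

Lemma prob_mono (T : finType) p (E E' : {set T} -> Prop) : 0 <= p <= 1 ->
  (forall F, E F -> E' F) -> prob p E <= prob p E'.
Proof.
move=> hp h; rewrite /prob.
apply: (big_ind2 (fun a b => a <= b)); [lra | move=> *; lra |].
move=> F _.
case: excluded_middle_informative => H1; case: excluded_middle_informative => H2.
- exact: Rle_refl.
- by exfalso; apply: H2; apply: h.
- exact (@wt_ge0 _ p F hp).
- exact: Rle_refl.
Qed.

Lemma prob_le1 (T : finType) p (E : {set T} -> Prop) : 0 <= p <= 1 -> prob p E <= 1.
Proof. move=> hp; rewrite -(prob_true T p); exact: prob_mono. Qed.
Arguments prob_mono {T} p {E E'} _ _.
Arguments prob_le1 {T} p E _.



Lemma prob_compl (T : finType) p (E E' : {set T} -> Prop) :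
  (forall F, E' F <-> ~ E F) -> prob p E' = 1 - prob p E.
Proof.
move=> h.
suff : prob p E + prob p E' = 1 by lra.
rewrite -(prob_true T p) /prob -big_split; apply: eq_bigr => F _ /=.
case: excluded_middle_informative => H1; case: excluded_middle_informative => H2;
  case: excluded_middle_informative => H3 //.
- by exfalso; apply: (proj1 (h F) H2).
- by rewrite ?Rplus_0_r ?Rplus_0_l.
- by rewrite ?Rplus_0_r ?Rplus_0_l.
- by exfalso; apply: H2; apply/h.
Qed.

Arguments prob_compl {T} p {E E'} _.

Lemma neqT (I : finType) (S : {set I}) : S != setT <-> exists i, i \notin S.
Proof.
split.
  move=> H; apply: NNPP => Hn; move/negP: H; apply.
  apply/eqP/setP => i; rewrite inE; apply: NNPP => Hi.
  by apply: Hn; exists i; apply/negP => Hi'; apply: Hi; rewrite Hi'.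
move=> [i Hi]; apply/eqP => HS; move: Hi; by rewrite HS inE.
Qed.

Lemma probW (V : finType) (l : nat) p (W : {set V}) (E : {set (V * 'I_l)} -> Prop) :
  (forall F, E F <-> forall v, v \in W -> exists i, (v, i) \notin F) ->
  prob p E = (1 - p ^ l) ^ #|W|.
Proof.
move=> h.
rewrite (prob_bool p (fun F => [forall v, (v \in W) ==> (slice F v != setT)])).
  rewrite -(key V l p W); apply: eq_bigr => F _; reflexivity.
move=> F; rewrite h; split.
  move=> H; apply/forallP => v; apply/implyP => Hv.
  have [i Hi] := H v Hv; apply/neqT; exists i; by rewrite inE.
move=> /forallP H v Hv; move: (H v); rewrite Hv /= => /neqT [i Hi].
by exists i; rewrite inE in Hi.
Qed.

Lemma foldr_none (l : nat) (M : Type) (g : 'I_l -> option M) (s : seq 'I_l) :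
  (forall j, g j = None) ->
  foldr (fun j acc => if g j is Some m then Some m else acc) None s = None.
Proof. move=> H; elim: s => //= j s ->; by rewrite H. Qed.

Lemma foldr_some (l : nat) (M : Type) (g : 'I_l -> option M) (m : M) (s : seq 'I_l) j0 :
  (forall j, g j = None \/ g j = Some m) -> j0 \in s -> g j0 = Some m ->
  foldr (fun j acc => if g j is Some m then Some m else acc) None s = Some m.
Proof.
move=> H; elim: s => //= j s IH; rewrite inE => /orP [/eqP <- ->|Hs Hg] //.
by case: (H j) => ->; [exact: IH | ].
Qed.

Lemma exec_om_S (V : finType) (S M I : Type) (G : rel V)
    (A : algorithm V S M I) (F : {set V}) (om : nat -> V -> V -> bool)
    (inp : nat -> V -> I) (r : nat) (v : V) :
  exec_om G A F om inp r.+1 v =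
  alg_update A v (exec_om G A F om inp r v)
        (fun w => if G w v && ~~ ((w \in F) && om r w v)
                  then Some (alg_send A w (exec_om G A F om inp r w) v) else None)
        (inp r v).
Proof. reflexivity. Qed.

Lemma sim_ok (V : finType) (S M I : Type) (l : nat) (G : rel V)
  (A : algorithm V S M I) (F : {set (V * 'I_l)}) :
  (forall v, exists i, (v, i) \notin F) -> strongly_simulates G A F.
Proof.
move=> hF inp om r; rewrite /exec.
elim: r => [|r IH] x; first reflexivity.
rewrite !exec_om_S IH.
have rg : forall a b : V * 'I_l, reinf_graph l G a b = G a.1 b.1 by [].
cbn [alg_update alg_send reinforce].
congr (alg_update _ _ _ _).
apply: functional_extensionality => w.
have -> : ~~ ((w \in (set0 : {set V})) && false) = true by rewrite andbF.
rewrite andbT /pick_msg.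
case: (boolP (G w x.1)) => Hg.
- have [i Hi] := hF w.
  apply: (@foldr_some _ _ _ _ _ i).
  + move=> j; rewrite rg Hg andTb.
    case: (((w, j) \in F) && om r (w, j) x); [left | right]; first reflexivity.
    by rewrite IH.
  + by rewrite mem_enum.
  + by rewrite rg Hg andTb (negbTE Hi) andFb IH.
- apply: foldr_none => j; by rewrite rg (negbTE Hg).
Qed.

Definition badA (n : nat) : algorithm 'I_n ('I_n -> bool) unit unit :=
  Algorithm (fun _ _ => false) (fun _ _ _ => tt) (fun _ _ rcv _ => fun u => isSome (rcv u)).

Lemma bad_sim (n l : nat) (G : rel 'I_n) (F : {set ('I_n * 'I_l.+1)}) v w :
  G v w -> (forall i, (v, i) \in F) -> ~ strongly_simulates G (badA n) F.
Proof.
move=> Hg HF Hs.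
have := Hs (fun _ _ => tt) (fun _ _ _ => true) 1%N (w, ord0).
rewrite /exec !exec_om_S.
cbn [alg_update alg_send alg_init reinforce badA].
move=> /(congr1 (fun f => f v)).
have -> : ~~ ((v \in (set0 : {set 'I_n})) && false) = true by rewrite andbF.
rewrite Hg /pick_msg foldr_none //.
by move=> j; rewrite HF andbT andbF.
Qed.

Theorem theorem4 (f : nat) (G : forall n : nat, rel 'I_n) (p : nat -> R)
  (hp : forall n, (0 <= p n <= 1)) :
  (* (a) p = o(n^{-1/(f+1)}) *)
  (Un_cv (fun n => p n * Rpower (INR n) (/ INR f.+1)) 0 ->
     Un_cv (fun n => prob (p n)
              (fun F : {set ('I_n * 'I_f.+1)%type} => forall v, exists i, (v, i) \notin F))
           1
  /\ forall (S M I : nat -> Type) (A : forall n, algorithm 'I_n (S n) (M n) (I n)),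
       Un_cv (fun n => prob (p n)
                (fun F : {set ('I_n * 'I_f.+1)%type} => strongly_simulates (G n) (A n) F))
             1)
  /\
  (* (b) Omega(n) nodes with non-zero outdegree and p = omega(n^{-1/(f+1)}) *)
  ((exists c : R, (0 < c) /\ exists N : nat, forall n : nat, (N <= n)%N ->
       (c * INR n <= INR #|[set v : 'I_n | [exists w, G n v w]]|)) ->
   cv_infty (fun n => p n * Rpower (INR n) (/ INR f.+1)) ->
     Un_cv (fun n => prob (p n)
              (fun F : {set ('I_n * 'I_f.+1)%type} =>
                 exists v, (exists w, G n v w) /\ forall i, (v, i) \in F))
           1
  /\ exists (S M I : nat -> Type) (A : forall n, algorithm 'I_n (S n) (M n) (I n)),
       ~ Un_cv (fun n => prob (p n)
                  (fun F : {set ('I_n * 'I_f.+1)%type} => strongly_simulates (G n) (A n) F))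
               1).
Proof.
have hl : (0 < f.+1)%N by [].
split.
  move=> hu.
  have HA : forall n, prob (p n) (fun F : {set ('I_n * 'I_f.+1)%type} =>
      forall v, exists i, (v, i) \notin F) = (1 - p n ^ f.+1) ^ n.
    move=> n; rewrite (@probW _ _ (p n) setT) ?cardsT ?card_ord //.
    by move=> F; split => H v; [move=> _; exact: H | exact: H].
  have LA := limA p f.+1 hp hl hu.
  split.
    move=> eps heps; have [N HN] := LA eps heps; exists N => n hn.
    rewrite HA; exact: HN.
  move=> S M I A eps heps; have [N HN] := LA eps heps; exists N => n hn.
  have h1 := prob_mono (p n) (hp n) (fun F => @sim_ok _ _ _ _ f.+1 (G n) (A n) F).
  rewrite HA in h1.
  have h2 := prob_le1 (p n) (fun F : {set ('I_n * 'I_f.+1)%type} =>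
                strongly_simulates (G n) (A n) F) (hp n).
  have H := HN n hn.
  move: H; rewrite /R_dist => H.
  move: h1 h2 H; set a := prob _ _; set b := _ ^ n => h1 h2 H.
  split_Rabs; lra.
move=> [c [hc [N hN]]] hu.
pose K n := #|[set v : 'I_n | [exists w, G n v w]]|.
have LB := limB p f.+1 K c N hp hl hc hN hu.
have HNB : forall n, prob (p n) (fun F : {set ('I_n * 'I_f.+1)%type} =>
    ~ exists v, (exists w, G n v w) /\ forall i, (v, i) \in F) = (1 - p n ^ f.+1) ^ (K n).
  move=> n; rewrite (@probW _ _ (p n) [set v : 'I_n | [exists w, G n v w]]) //.
  move=> F; split.
    move=> H v; rewrite inE => /existsP [w Hw]; apply: NNPP => Hn; apply: H.
    exists v; split; first by exists w.
    move=> i; apply: NNPP => Hi; apply: Hn; exists i; exact/negP.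
  move=> H [v [[w Hw] Hall]].
  have [i Hi] := H v ltac:(rewrite inE; apply/existsP; exists w; exact: Hw).
  by rewrite Hall in Hi.
split.
  move=> eps heps; have [N2 HN2] := LB eps heps; exists N2 => n hn.
  rewrite (prob_compl (p n) (E := fun F : {set ('I_n * 'I_f.+1)%type} =>
    ~ exists v, (exists w, G n v w) /\ forall i, (v, i) \in F)); last first.
    by move=> F; split; [move=> H Hn | move=> H; apply: NNPP].
  rewrite HNB.
  have := HN2 n hn; rewrite /R_dist; set b := _ ^ _ => H.
  split_Rabs; lra.
exists (fun n => 'I_n -> bool), (fun _ => unit), (fun _ => unit), badA.
move=> Hcv.
have [N1 HN1] := Hcv (1/2) ltac:(lra).
have [N2 HN2] := LB (1/2) ltac:(lra).
pose n := Nat.max N1 N2.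
have hn1 : (n >= N1)%coq_nat by apply: Nat.le_max_l.
have hn2 : (n >= N2)%coq_nat by apply: Nat.le_max_r.
have h1 : prob (p n) (fun F : {set ('I_n * 'I_f.+1)%type} =>
                strongly_simulates (G n) (badA n) F) <=
          prob (p n) (fun F : {set ('I_n * 'I_f.+1)%type} =>
    ~ exists v, (exists w, G n v w) /\ forall i, (v, i) \in F).
  apply: (prob_mono (p n) (hp n)) => F Hs [v [[w Hw] Hall]].
  exact: (@bad_sim n f (G n) F v w Hw Hall Hs).
rewrite HNB in h1.
have := HN1 n hn1; have := HN2 n hn2; rewrite /R_dist.
move: h1; set a := prob _ _; set b := _ ^ _ => h1 H2 H1.
split_Rabs; lra.
Qed.
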